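(* Let $\mathcal{T}=(\mathbb{K}_i,\phi_i)_{i=0,\dots,m}$ be a tower with $\mathbb{K}_0=\emptyset$ whose maps are elementary inclusions or elementary contractions (named according to the naming convention below), let $\Delta$ be its dimension, $n$ its number of elementary inclusions, $n_0$ the number of vertex inclusions, and let $\hat{\mathbb{K}}_m$ be the last complex of the active small coning construction. Then $|\hat{\mathbb{K}}_m|\le n+2\cdot(\Delta+1)\cdot n\cdot(1+\log_2 n_0)=O(n\cdot\Delta\cdot\log_2 n_0)$.
   Context: Simplicial complexes are finite abstract simplicial complexes; the dimension of a tower is the maximal dimension of a simplex in any $\mathbb{K}_i$. $\phi_i$ is an elementary inclusion if $\mathbb{K}_{i+1}=\mathbb{K}_i\cup\{\sigma\}$ with $\sigma\notin\mathbb{K}_i$ and $\phi_i$ the inclusion (a vertex inclusion if $\sigma$ is a vertex); it is an elementary contraction of distinct vertices $u,v\in\mathbb{K}_i$ if for one of them, say $v$, the vertex set of $\mathbb{K}_{i+1}$ is that of $\mathbb{K}_i$ minus $v$, $\phi_i(u)=\phi_i(v)=u$, $\phi_i$ is the identity on other vertices, and $\mathbb{K}_{i+1}=\phi_i(\mathbb{K}_i)$. Active small coning construction: $\hat{\mathbb{K}}_0=\emptyset$; vertices of $\hat{\mathbb{K}}_i$ are flagged active/inactive; a simplex is active if all its vertices are. $\mathrm{Act}\overline{\mathrm{St}}(w,\hat{\mathbb{K}}_i)$ is the set of active simplices of $\hat{\mathbb{K}}_i$ in the closed star of $w$ (all faces of simplices containing $w$); $w\ast S=\{\{w\}\cup\tau:\tau\in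 S\}$. On an elementary inclusion of $\sigma$: $\hat{\mathbb{K}}_{i+1}=\hat{\mathbb{K}}_i\cup\{\sigma\}$, a new vertex being marked active. On an elementary contraction of $u,v$: if $|\mathrm{Act}\overline{\mathrm{St}}(u,\hat{\mathbb{K}}_i)|\le|\mathrm{Act}\overline{\mathrm{St}}(v,\hat{\mathbb{K}}_i)|$, set $\hat{\mathbb{K}}_{i+1}=\hat{\mathbb{K}}_i\cup(v\ast\mathrm{Act}\overline{\mathrm{St}}(u,\hat{\mathbb{K}}_i))$ and mark $u$ inactive; otherwise the same with $u,v$ swapped. Naming convention: each contraction maps $u,v$ to the one not marked inactive. *)

(* Defs.v *)
From HB Require Import structures.
From mathcomp Require Import all_boot.
From mathcomp Require Import finmap.

Set Implicit Arguments.
Unset Strict Implicit.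
Unset Printing Implicit Defensive.

Local Open Scope fset_scope.

Definition simplex := {fset nat}.
Definition complex := {fset {fset nat}}.

Definition is_complex (K : complex) : Prop :=
  forall s, s \in K -> s != fset0 /\
    (forall t : {fset nat}, t != fset0 -> t `<=` s -> t \in K).

Definition is_vertex (K : complex) (x : nat) : bool :=
  has (fun s : {fset nat} => x \in s) K.

(* An elementary map of a tower:
   - Incl s     : elementary inclusion of the simplex s;
   - Contr u v  : elementary contraction of the distinct vertices u, v,
                  where v is removed and phi(u) = phi(v) = u. *)
Inductive step := Incl of {fset nat} | Contr of nat & nat.

Definition contr_map (u v : nat) (x : nat) : nat := if x == v then u else x.

Definition apply_step (K : complex) (st : step) : complex :=
  match st with
  | Incl s => s |` K
  | Contr u v => [fset [fset contr_map u v x | x in s] | s : {fset nat} in K]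
  end.

Definition valid_step (K : complex) (st : step) : Prop :=
  match st with
  | Incl s => s \notin K
  | Contr u v => [/\ u != v, is_vertex K u & is_vertex K v]
  end.

Definition towerK (ts : seq step) (i : nat) : complex :=
  foldl apply_step fset0 (take i ts).

Definition is_vertex_incl (st : step) : bool :=
  if st is Incl s then #|` s| == 1 else false.

Definition is_incl (st : step) : bool := if st is Incl _ then true else false.

Definition n_incl (ts : seq step) : nat := count is_incl ts.
Definition n_vertex_incl (ts : seq step) : nat := count is_vertex_incl ts.

Definition cdim (K : complex) : nat := \max_(s <- K) (#|` s| - 1).
Definition tower_dim (ts : seq step) : nat :=
  \max_(i < (size ts).+1) cdim (towerK ts i).

(* state = (hat K_i, set of active vertices of hat K_i) *)
Definition cstate := (complex * {fset nat})%type.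

Definition active (act : {fset nat}) (s : {fset nat}) : bool := s `<=` act.

Definition act_star (w : nat) (st : cstate) : complex :=
  [fset s in st.1 | active st.2 s &&
     has (fun t : {fset nat} => (w \in t) && (s `<=` t)) st.1].

Definition cone (w : nat) (S : complex) : complex := [fset w |` s | s : {fset nat} in S].

(* For the contraction Contr u v (v removed,
   mapped to u), by the naming convention v is the vertex marked inactive,
   i.e. the vertex whose active closed star is not larger (see hypothesis
   [naming_convention]); the construction adds u * ActSt(v) and marks v
   inactive. *)
Definition coning_step (st : cstate) (x : step) : cstate :=
  match x with
  | Incl s => (s |` st.1, if #|` s| == 1 then st.2 `|` s else st.2)
  | Contr u v => (st.1 `|` cone u (act_star v st), st.2 `\ v)
  end.

Definition coning (ts : seq step) (i : nat) : cstate :=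
  foldl coning_step (fset0, fset0) (take i ts).

Definition naming_convention (ts : seq step) : Prop :=
  forall i u v, i < size ts -> nth (Incl fset0) ts i = Contr u v ->
    #|` act_star v (coning ts i)| <= #|` act_star u (coning ts i)|.

Definition valid_tower (ts : seq step) : Prop :=
  (forall i, i <= size ts -> is_complex (towerK ts i)) /\
  (forall i, i < size ts -> valid_step (towerK ts i) (nth (Incl fset0) ts i)) /\
  (forall i x, i < size ts -> nth (Incl fset0) ts i = Incl [fset x] ->
     forall j, j <= i -> ~~ is_vertex (towerK ts j) x).

(* Main.v *)
Require Import Defs.
From HB Require Import structures.
From mathcomp Require Import all_boot.
From mathcomp Require Import finmap.
From Stdlib Require Import Reals.
From mathcomp Require Import zify.
From Stdlib Require Import Lra.
Set Implicit Arguments. Unset Strict Implicit. Unset Printing Implicit Defensive.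
Local Open Scope fset_scope.

Lemma towerKS ts i : i < size ts ->
  towerK ts i.+1 = apply_step (towerK ts i) (nth (Incl fset0) ts i).
Proof. by move=> h; rewrite /towerK (take_nth (Incl fset0) h) -cats1 foldl_cat. Qed.

Lemma coningS ts i : i < size ts ->
  coning ts i.+1 = coning_step (coning ts i) (nth (Incl fset0) ts i).
Proof. by move=> h; rewrite /coning (take_nth (Incl fset0) h) -cats1 foldl_cat. Qed.

Lemma is_vertexP (K : complex) x : reflect (exists2 s, s \in K & x \in s) (is_vertex K x).
Proof. exact: hasP. Qed.

Lemma imfset_id_notin u v (s : {fset nat}) : v \notin s -> [fset contr_map u v x | x in s] = s.
Proof.
move=> vs; apply/fsetP=> y; apply/imfsetP/idP => [[x xs ->]|ys].
  by rewrite /contr_map; case: eqP => // exv; rewrite -exv xs in vs.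
by exists y => //; rewrite /contr_map; case: eqP => // eyv; rewrite -eyv ys in vs.
Qed.

Lemma act_starP w (st : cstate) r : r \in act_star w st ->
  [/\ r \in st.1, r `<=` st.2 & exists2 t, t \in st.1 & (w \in t) && (r `<=` t)].
Proof.
rewrite /act_star inE /= => /andP [rH /andP [rA /hasP [t tH P]]].
by split => //; exists t.
Qed.

Definition Inv ts i :=
 [/\ (forall t s, t \in (coning ts i).1 -> s `<=` t -> s `<=` (coning ts i).2 -> s != fset0 -> s \in towerK ts i),
     fset0 \notin (coning ts i).1,
     (forall t x, t \in (coning ts i).1 -> x \in t -> exists2 j, j <= i & is_vertex (towerK ts j) x)
   & (forall x, is_vertex (towerK ts i) x -> x \in (coning ts i).2)].

Lemma Inv_all ts : valid_tower ts -> forall i, i <= size ts -> Inv ts i.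
Proof.
move=> [Vc [Vs Vn]]; elim=> [|i IH] hi.
  rewrite /Inv /coning /towerK take0 /=; split=> //; try by move=> t s; rewrite in_fset0.
have hi' : i < size ts by [].
have [I1 I2 I3 I4] := IH (ltnW hi).
have cK := Vc _ hi. have vs := Vs _ hi'. have vn := Vn i.
rewrite /Inv coningS // towerKS //. rewrite towerKS // in cK.
move: vs vn cK; case E: (nth _ ts i) => [sg|u v] /= vs vn cK.
-
  have sgK : sg \in sg |` towerK ts i by rewrite fsetU11.
  have [sg0 sgf] := cK _ sgK.
  split.
  + move=> t s; rewrite in_fset1U => /orP [/eqP->|tH] st sA s0.
      by apply: sgf.
    rewrite in_fset1U; apply/orP; right; apply: (I1 t) => //.
    case: ifP sA => // /cardfs1P [y sgy] sA.
    apply/fsubsetP => z zs.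
    have := fsubsetP sA _ zs; rewrite in_fsetU => /orP [] // zy.
    move: zy; rewrite sgy in_fset1 => /eqP zy; subst z.
    have [j ji vj] := I3 _ _ tH (fsubsetP st _ zs).
    by have := vn y hi'; rewrite sgy => /(_ erefl j ji); rewrite vj.
  + by rewrite in_fset1U negb_or eq_sym sg0.
  + move=> t x; rewrite in_fset1U => /orP [/eqP->|tH] xt.
      exists i.+1 => //; rewrite towerKS //; rewrite E /=; apply/is_vertexP; exists sg => //.
    by have [j ji vj] := I3 _ _ tH xt; exists j => //; rewrite (leq_trans ji).
  + move=> x /is_vertexP [s]; rewrite in_fset1U => /orP [/eqP->|sK] xs.
      case: ifP => [_|c1]; first by rewrite in_fsetU xs orbT.
      have xsg : [fset x] \in sg |` towerK ts i.
        apply: sgf; first by apply/fset0Pn; exists x; rewrite in_fset1.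
        by apply/fsubsetP => z; rewrite in_fset1 => /eqP->.
      move: xsg; rewrite in_fset1U => /orP [/eqP xe|xK].
        by rewrite -xe cardfs1 in c1.
      by apply: I4; apply/is_vertexP; exists [fset x] => //; rewrite in_fset1.
    have := I4 x; rewrite (_ : is_vertex _ x = true); last by apply/is_vertexP; exists s.
    by move=> /(_ erefl) xA; case: ifP => _ //; rewrite in_fsetU xA.
- case: vs => uv Ku Kv.
  have uA := I4 _ Ku; have vA := I4 _ Kv.
  have keep : forall s, s \in towerK ts i -> v \notin s -> s \in [fset [fset contr_map u v x | x in s0] | s0 : {fset nat} in towerK ts i].
    by move=> s sK vs; rewrite -(imfset_id_notin u vs); apply: in_imfset.
  split.
  + move=> t s; rewrite in_fsetU => /orP [tH|tc] st sA s0.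
      have vs : v \notin s.
        by apply/negP => vs; have := fsubsetP sA _ vs; rewrite in_fsetD1 eqxx.
      apply: keep vs; apply: (I1 t) => //; apply: fsubset_trans sA _; exact: fsubsetDl.
    move: tc => /imfsetP [r /= rS ->] {t} in st *.
    have [rH rA [t0 t0H /andP [vt0 rt0]]] := act_starP rS.
    have vs : v \notin s.
      by apply/negP => vs; have := fsubsetP sA _ vs; rewrite in_fsetD1 eqxx.
    have sA' : s `<=` (coning ts i).2 by apply: fsubset_trans sA _; exact: fsubsetDl.
    case us: (u \in s); last first.
      have sr : s `<=` r.
        apply/fsubsetP => z zs; move: (fsubsetP st _ zs); rewrite in_fset1U => /orP [/eqP zu|//].
        by rewrite zu us in zs.
      apply: keep vs; apply: (I1 t0) => //; exact: fsubset_trans sr rt0.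
    have s0K : v |` (s `\ u) \in towerK ts i.
      apply: (I1 t0) => //.
      - apply/fsubsetP => z; rewrite in_fset1U in_fsetD1 => /orP [/eqP->//|/andP [zu zs]].
        move: (fsubsetP st _ zs); rewrite in_fset1U (negbTE zu) /= => zr.
        exact: (fsubsetP rt0).
      - apply/fsubsetP => z; rewrite in_fset1U in_fsetD1 => /orP [/eqP->//|/andP [zu zs]].
        exact: (fsubsetP sA').
      - by apply/fset0Pn; exists v; rewrite fsetU11.
    have -> : s = [fset contr_map u v x | x in v |` (s `\ u)].
      apply/fsetP => z; apply/idP/imfsetP => [zs|[x /= + ->]].
        case: (eqVneq z u) => [->|zu].
          by exists v; rewrite ?fsetU11 // /contr_map eqxx.
        exists z; first by rewrite /= in_fset1U in_fsetD1 zu zs orbT.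
        rewrite /contr_map; case: eqP => // zv; by rewrite -zv zs in vs.
      rewrite in_fset1U in_fsetD1 => /orP [/eqP->|/andP [xu xs]].
        by rewrite /contr_map eqxx.
      rewrite /contr_map; case: eqP => // xv; by rewrite -xv xs in vs.
    by apply: in_imfset.
  + rewrite in_fsetU negb_or I2 /=; apply/imfsetP => [[r _ e]].
    by have := fsetU11 u r; rewrite -e in_fset0.
  + move=> t x; rewrite in_fsetU => /orP [tH|/imfsetP [r /= rS ->]] xt.
      by have [j ji vj] := I3 _ _ tH xt; exists j => //; rewrite (leq_trans ji).
    move: xt; rewrite in_fset1U => /orP [/eqP->|xr]; first by exists i.
    have [rH _ _] := act_starP rS.
    by have [j ji vj] := I3 _ _ rH xr; exists j => //; rewrite (leq_trans ji).
  + move=> x /is_vertexP [s' /imfsetP [s /= sK ->]] /imfsetP [y /= ys ->].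
    rewrite in_fsetD1 /contr_map; case: ifP => [_|/negbT yv]; first by rewrite uv uA.
    by rewrite yv I4 //; apply/is_vertexP; exists s.
Qed.

Definition vset (st : step) : {fset nat} :=
  if st is Incl s then (if #|` s| == 1 then s else fset0) else fset0.
Definition Yof (l : seq step) : {fset nat} := \bigcup_(st <- l) vset st.
Definition mstep (M : nat -> nat) (st : step) : nat -> nat :=
  if st is Contr u v then (fun y => contr_map u v (M y)) else M.
Definition Mi ts i := foldl mstep (fun y : nat => y) (take i ts).
Definition Yi ts i := Yof (take i ts).
Definition Cl ts i x := [fset y in Yi ts i | Mi ts i y == x].

Lemma MiS ts i : i < size ts -> Mi ts i.+1 = mstep (Mi ts i) (nth (Incl fset0) ts i).
Proof. by move=> h; rewrite /Mi (take_nth (Incl fset0) h) -cats1 foldl_cat. Qed.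

Lemma YiS ts i : i < size ts -> Yi ts i.+1 = Yi ts i `|` vset (nth (Incl fset0) ts i).
Proof. by move=> h; rewrite /Yi /Yof (take_nth (Incl fset0) h) -cats1 big_cat big_seq1. Qed.

Lemma card_Yof l : #|` Yof l| <= count is_vertex_incl l.
Proof.
elim: l => [|a l IH]; first by rewrite /Yof big_nil cardfs0.
rewrite /Yof big_cons /=; apply: leq_trans (leq_card_fsetU _ _) _.
rewrite -/(Yof l) leq_add //.
case: a => [s|u v] //=.
by case: ifP => [/eqP->|_]; rewrite ?cardfs0.
Qed.

Lemma Yi_sub ts i : Yi ts i `<=` Yof ts.
Proof.
rewrite /Yi /Yof -{2}(cat_take_drop i ts) big_cat /=; exact: fsubsetUl.
Qed.

Lemma vertex_nonsingle (K : complex) sg x : is_complex (sg |` K) -> x \in sg -> #|` sg| != 1 ->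
  is_vertex K x.
Proof.
move=> cK xs c1.
have [_ sgf] := cK sg (fsetU11 _ _).
have : [fset x] \in sg |` K.
  apply: sgf; first by apply/fset0Pn; exists x; rewrite in_fset1.
  by apply/fsubsetP => z; rewrite in_fset1 => /eqP->.
rewrite in_fset1U => /orP [/eqP xe|xK]; first by rewrite -xe cardfs1 in c1.
by apply/is_vertexP; exists [fset x] => //; rewrite in_fset1.
Qed.

Definition J ts i :=
  (forall x, is_vertex (towerK ts i) x -> x \in Yi ts i /\ Mi ts i x = x) /\
  (forall y, Mi ts i y != y -> exists2 j, j <= i & is_vertex (towerK ts j) y).

Lemma J_all ts : valid_tower ts -> forall i, i <= size ts -> J ts i.
Proof.
move=> [Vc [Vs Vn]]; elim=> [|i IH] hi.
  split; first by move=> x /is_vertexP [s]; rewrite /towerK take0 in_fset0.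
  by move=> y; rewrite /Mi take0 eqxx.
have hi' : i < size ts by [].
have [J1 J2] := IH (ltnW hi).
have cK := Vc _ hi. have vs := Vs _ hi'. have vn := Vn i.
rewrite /J MiS // YiS // towerKS //. rewrite towerKS // in cK.
move: vs vn cK; case E: (nth _ ts i) => [sg|u v] /= vs vn cK.
- split; last first.
    by move=> y /J2 [j ji vj]; exists j => //; rewrite (leq_trans ji).
  move=> x /is_vertexP [s]; rewrite in_fset1U => /orP [/eqP->|sK] xs; last first.
    have [h1 h2] := J1 x (introT (is_vertexP _ _) (ex_intro2 _ _ s sK xs)).
    by rewrite in_fsetU h1.
  case: (boolP (#|` sg| == 1)) => c1; last first.
    have [h1 h2] := J1 x (vertex_nonsingle cK xs c1).
    by rewrite in_fsetU h1.
  split; first by rewrite in_fsetU xs orbT.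
  move: (c1) => /cardfs1P [y sgy]; move: xs; rewrite sgy in_fset1 => /eqP ->.
  case: (eqVneq (Mi ts i y) y) => // nx; have [j ji vj] := J2 _ nx.
  by have := vn y hi'; rewrite sgy => /(_ erefl j ji); rewrite vj.
- case: vs => uv Ku Kv; split.
    move=> x /is_vertexP [s' /imfsetP [s /= sK ->]] /imfsetP [y /= ys ->].
    rewrite in_fsetU orbC /= -/(Yi ts i).
    rewrite /contr_map; case: ifP => [/eqP yv|/negbT yv].
      have [h1 h2] := J1 u Ku; split => //; rewrite h2 ifN_eq //.
    have [h1 h2] := J1 y (introT (is_vertexP _ _) (ex_intro2 _ _ s sK ys)).
    by split => //; rewrite h2 ifN_eq.
  move=> y; case: (eqVneq (Mi ts i y) y) => [e|/J2 [j ji vj] _]; last first.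
    by exists j => //; rewrite (leq_trans ji).
  rewrite e /contr_map; case: ifP => [/eqP yv _|]; last by rewrite eqxx.
  by exists i => //; rewrite yv.
Qed.

Definition Dset ts i x := [fset s in towerK ts i | x \in s].
Definition D ts i x := #|` Dset ts i x|.
Definition Cc ts i x := #|` Cl ts i x|.

Lemma inDset ts i x s : (s \in Dset ts i x) = (s \in towerK ts i) && (x \in s).
Proof. by rewrite /Dset inE. Qed.

Lemma inCl ts i x y : (y \in Cl ts i x) = (y \in Yi ts i) && (Mi ts i y == x).
Proof. by rewrite /Cl inE. Qed.

Lemma card_imfset_le (f : {fset nat} -> {fset nat}) (A : {fset {fset nat}}) :
  #|` [fset f x | x in A]| <= #|` A|.
Proof. exact: leq_imfset_card. Qed.

Lemma D_contr_other ts i u v x : i < size ts -> nth (Incl fset0) ts i = Contr u v ->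
  x != u -> D ts i.+1 x <= D ts i x.
Proof.
move=> hi E xu; rewrite /D.
apply: leq_trans (card_imfset_le (fun s : {fset nat} => [fset contr_map u v y | y in s]) (Dset ts i x)).
apply: fsubset_leq_card; apply/fsubsetP => s'; rewrite inDset towerKS // E /=.
move=> /andP [/imfsetP [s /= sK ->] /imfsetP [y /= ys xe]].
apply/imfsetP; exists s => //=; rewrite inDset sK /=.
move: xe; rewrite /contr_map; case: ifP => [_ xe|_ ->//]; by rewrite xe eqxx in xu.
Qed.

Lemma D_contr_u ts i u v : i < size ts -> nth (Incl fset0) ts i = Contr u v ->
  D ts i.+1 u <= D ts i u + D ts i v.
Proof.
move=> hi E; rewrite /D; apply: leq_trans (leq_card_fsetU _ _).
apply: leq_trans (card_imfset_le (fun s : {fset nat} => [fset contr_map u v y | y in s]) (Dset ts i u `|` Dset ts i v)).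
apply: fsubset_leq_card; apply/fsubsetP => s'; rewrite inDset towerKS // E /=.
move=> /andP [/imfsetP [s /= sK ->] /imfsetP [y /= ys xe]].
apply/imfsetP; exists s => //=; rewrite in_fsetU !inDset sK /=.
move: xe; rewrite /contr_map; case: ifP => [/eqP e _|_ e]; subst; by rewrite ys ?orbT.
Qed.

Lemma D_contr_v ts i u v : i < size ts -> nth (Incl fset0) ts i = Contr u v ->
  u != v -> D ts i.+1 v = 0.
Proof.
move=> hi E uv; rewrite /D; apply/eqP; rewrite cardfs_eq0; apply/eqP/fsetP => s'.
rewrite inDset in_fset0 towerKS // E /=; apply/negP.
move=> /andP [/imfsetP [s /= sK ->] /imfsetP [y /= ys]].
rewrite /contr_map; case: ifP => [_ e|/negbT yv e]; first by rewrite e eqxx in uv.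
by rewrite e eqxx in yv.
Qed.

Lemma Cl_contr_other ts i u v x : i < size ts -> nth (Incl fset0) ts i = Contr u v ->
  x != u -> x != v -> Cl ts i.+1 x = Cl ts i x.
Proof.
move=> hi E xu xv; apply/fsetP => y; rewrite !inCl YiS // MiS // E /= fsetU0.
congr (_ && _); rewrite /contr_map; case: ifP => [/eqP ->|//].
by rewrite eq_sym (negbTE xu) eq_sym (negbTE xv).
Qed.

Lemma Cc_contr_u ts i u v : i < size ts -> nth (Incl fset0) ts i = Contr u v ->
  u != v -> Cc ts i.+1 u = (Cc ts i u + Cc ts i v)%nat.
Proof.
move=> hi E uv; rewrite /Cc.
have -> : Cl ts i.+1 u = Cl ts i u `|` Cl ts i v.
  apply/fsetP => y; rewrite in_fsetU !inCl YiS // MiS // E /= fsetU0 -andb_orr.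
  congr (_ && _); rewrite /contr_map; case: ifP => [/eqP ->|/negbT]; first by rewrite eqxx orbT.
  by move=> _; rewrite orbF.
suff e0 : Cl ts i u `&` Cl ts i v = fset0 by rewrite -cardfsUI e0 cardfs0 addn0.
apply/fsetP => y; rewrite in_fsetI !inCl in_fset0.
case: (Mi ts i y =P u) => [->|]; last by rewrite andbF.
by rewrite (negbTE uv) !andbF.
Qed.

Lemma Cc_pos ts i x : J ts i -> is_vertex (towerK ts i) x -> 0 < Cc ts i x.
Proof.
move=> [J1 _] /J1 [h1 h2]; rewrite /Cc cardfs_gt0; apply/fset0Pn; exists x.
by rewrite inCl h1 h2 eqxx.
Qed.

Lemma Cc_sum ts i u v : u != v -> Cc ts i u + Cc ts i v <= n_vertex_incl ts.
Proof.
move=> uv; rewrite /Cc -cardfsUI.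
have -> : Cl ts i u `&` Cl ts i v = fset0.
  apply/fsetP => y; rewrite in_fsetI !inCl in_fset0.
  case: (Mi ts i y =P u) => [->|]; last by rewrite andbF.
  by rewrite (negbTE uv) !andbF.
rewrite cardfs0 addn0; apply: leq_trans (card_Yof ts).
apply: fsubset_leq_card; apply: fsubset_trans (Yi_sub ts i).
by apply/fsubsetP => y; rewrite in_fsetU !inCl => /orP [] /andP [].
Qed.

Lemma Cc_le ts i x : Cc ts i x <= n_vertex_incl ts.
Proof.
apply: leq_trans (card_Yof ts); apply: fsubset_leq_card; apply: fsubset_trans (Yi_sub ts i).
by apply/fsubsetP => y; rewrite inCl => /andP [].
Qed.

Definition Lg ts := trunc_log 2 (n_vertex_incl ts).
Definition w ts i x := Lg ts - trunc_log 2 (Cc ts i x).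
Definition U ts : {fset nat} := \bigcup_(i <- iota 0 (size ts).+1) \bigcup_(s <- towerK ts i) s.
Definition Phi ts i := \sum_(x <- U ts) D ts i x * w ts i x.

Lemma inU ts i x : i <= size ts -> is_vertex (towerK ts i) x -> x \in U ts.
Proof.
move=> hi /is_vertexP [s sK xs].
have h1 : s `<=` \bigcup_(s <- towerK ts i) s by apply: bigfcup_sup.
have h2 : (\bigcup_(s <- towerK ts i) s) `<=` U ts.
  apply: (bigfcup_sup (fun i => \bigcup_(s <- towerK ts i) s)) => //.
  by rewrite mem_iota add0n ltnS hi.
exact: (fsubsetP h2) (fsubsetP h1 _ xs).
Qed.

Lemma count_fset_le (A B : {fset nat}) : count (mem B) A <= #|` B|.
Proof.
rewrite -size_filter; apply: uniq_leq_size; first by rewrite filter_uniq // fset_uniq.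
by move=> x; rewrite mem_filter => /andP [].
Qed.

Lemma key (L a b Du Dv Du' : nat) : 0 < a -> 0 < b -> trunc_log 2 (a + b) <= L -> Du' <= Du + Dv ->
  Du' * (L - trunc_log 2 (a+b)) + minn Du Dv <= Du * (L - trunc_log 2 a) + Dv * (L - trunc_log 2 b).
Proof.
wlog ab : a b Du Dv / a <= b => [W|] a0 b0 TL hD.
  case: (leqP a b) => [h|/ltnW h]; first exact: W.
  rewrite minnC [X in _ <= X]addnC [(a + b)%nat]addnC; rewrite [(a + b)%nat]addnC in TL; rewrite addnC in hD; exact: W.
have ta : (trunc_log 2 a).+1 <= trunc_log 2 (a + b).
  apply: trunc_log_max => //; rewrite expnS mul2n -addnn leq_add //.
    exact: trunc_logP.
  exact: leq_trans (trunc_logP _ a0) ab.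
have tb : trunc_log 2 b <= trunc_log 2 (a + b) by apply: leq_trunc_log; rewrite leq_addl.
move: ta tb TL; set T := trunc_log 2 (a+b); set A := trunc_log 2 a; set B := trunc_log 2 b => ta tb TL.
have h1 : (L - T).+1 <= L - A by lia.
have h2 : L - T <= L - B by lia.
move: h1 h2; set X := L - T; set P := L - A; set Q := L - B => h1 h2.
have hm : minn Du Dv <= Du by apply: geq_minl.
nia.
Qed.

Lemma Phi_contr ts i u v : valid_tower ts -> i < size ts -> nth (Incl fset0) ts i = Contr u v ->
  Phi ts i.+1 + minn (D ts i u) (D ts i v) <= Phi ts i.
Proof.
move=> VT hi E.
have [_ [Vs _]] := VT.
have := Vs _ hi; rewrite E => -[uv Ku Kv].
have uU := inU (ltnW hi) Ku.
have vU : v \in U ts `\ u by rewrite in_fsetD1 (eq_sym v u) uv (inU (ltnW hi) Kv).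
have Ji := J_all VT (ltnW hi).
rewrite /Phi !(big_fsetD1 _ uU) !(big_fsetD1 _ vU) (D_contr_v hi E uv).
rewrite /= mul0n add0n.
have rest : \sum_(x <- U ts `\ u `\ v) D ts i.+1 x * w ts i.+1 x <= \sum_(x <- U ts `\ u `\ v) D ts i x * w ts i x.
  rewrite big_seq [X in _ <= X]big_seq; apply: leq_sum => x; rewrite !in_fsetD1 => /and3P [xv xu _].
  rewrite /w /Cc (Cl_contr_other hi E xu xv); apply: leq_mul => //; exact: D_contr_other hi E xu.
have kk : D ts i.+1 u * w ts i.+1 u + minn (D ts i u) (D ts i v) <= D ts i u * w ts i u + D ts i v * w ts i v.
  rewrite /w (Cc_contr_u hi E uv); apply: key.
  - exact: Cc_pos Ji Ku.
  - exact: Cc_pos Ji Kv.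
  - by apply: leq_trunc_log; apply: Cc_sum.
  - exact: D_contr_u hi E.
move: rest kk; set S1 := (\sum_(x <- _) D ts i.+1 x * _); set S2 := (\sum_(x <- _) D ts i x * _); set m := minn _ _.
set p1 := D ts i.+1 u * _; set p2 := D ts i u * _; set p3 := D ts i v * _; lia.
Qed.

Lemma D_incl ts i sg x : i < size ts -> nth (Incl fset0) ts i = Incl sg -> sg \notin towerK ts i ->
  D ts i.+1 x = ((x \in sg) + D ts i x)%nat.
Proof.
move=> hi E sK; rewrite /D.
case xs: (x \in sg).
  have -> : Dset ts i.+1 x = sg |` Dset ts i x.
    by apply/fsetP => s; rewrite in_fset1U !inDset towerKS // E /= in_fset1U andb_orl;
       case: eqP => // ->; rewrite xs.
  by rewrite cardfsU1 inDset (negbTE sK).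
have -> : Dset ts i.+1 x = Dset ts i x.
  apply/fsetP => s; rewrite !inDset towerKS // E /= in_fset1U andb_orl.
  by case: eqP => // ->; rewrite xs.
by [].
Qed.

Lemma Phi_incl ts i sg : valid_tower ts -> i < size ts -> nth (Incl fset0) ts i = Incl sg ->
  Phi ts i.+1 <= Phi ts i + #|` sg| * Lg ts.
Proof.
move=> VT hi E.
have [_ [Vs Vn]] := VT.
have := Vs _ hi; rewrite E /= => sK.
have [J1 J2] := J_all VT (ltnW hi).
have term : forall x, D ts i.+1 x * w ts i.+1 x <= D ts i x * w ts i x + (x \in sg) * Lg ts.
  move=> x; rewrite (D_incl x hi E sK).
  case: (boolP (x \in vset (Incl sg))) => xv.
    move: xv; rewrite /=; case: ifP => [/cardfs1P [y sgy]|]; last by rewrite in_fset0.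
    rewrite sgy in_fset1 => /eqP xy; subst x.
    have nv := Vn i y hi; rewrite E sgy in nv; have {nv} := nv erefl i (leqnn i) => nv.
    have -> : D ts i y = 0.
      apply/eqP; rewrite /D cardfs_eq0; apply/eqP/fsetP => s; rewrite inDset in_fset0.
      apply/negP => /andP [sK' ys]; move/negP: nv; apply; apply/is_vertexP; by exists s.
    by rewrite eqxx addn0 mul1n mul0n add0n mul1n /w leq_subr.
  have -> : w ts i.+1 x = w ts i x.
    rewrite /w /Cc; congr (_ - trunc_log 2 #|` _|); apply/fsetP => y.
    rewrite !inCl YiS // MiS // E /= in_fsetU.
    case: (boolP (y \in vset (Incl sg))) => yv; last by rewrite orbF.
    rewrite orbT /=.
    case: eqP => My; rewrite ?andbF //.
    have yx : y = x.
      rewrite -My; apply/eqP; apply: contraT => nx; rewrite eq_sym in nx; have [j ji vj] := J2 _ nx.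
      move: yv; rewrite /=; case: ifP => [/cardfs1P [z sgz]|]; last by rewrite in_fset0.
      rewrite sgz in_fset1 => /eqP yz; subst y.
      by have := Vn i z hi; rewrite E sgz => /(_ erefl j ji); rewrite vj.
    by subst y; rewrite yv in xv.
  rewrite mulnDl addnC leq_add //; rewrite leq_mul2l /w leq_subr orbT //.
rewrite /Phi.
apply: leq_trans.
  apply: leq_sum => x _; exact: term x.
rewrite big_split /= leq_add2l -big_distrl /= leq_mul2r; apply/orP; right.
have -> : \sum_(x <- U ts) (x \in sg) = count (mem sg) (U ts).
  by rewrite -sum1_count [RHS]big_mkcond /=; apply: eq_bigr => x _; case: (x \in sg).
exact: count_fset_le.
Qed.

Lemma act_star_le ts i x : valid_tower ts -> i <= size ts -> is_vertex (towerK ts i) x ->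
  #|` act_star x (coning ts i)| <= 2 * D ts i x.
Proof.
move=> VT hi Kx; have [I1 I2 _ I4] := Inv_all VT hi; have xA := I4 _ Kx.
have sub : act_star x (coning ts i) `<=` Dset ts i x `|` [fset s `\ x | s in Dset ts i x].
  apply/fsubsetP => s /act_starP [sH sA [t tH /andP [xt st]]].
  have s0 : s != fset0 by apply: contraNneq I2 => <-.
  have sK : s \in towerK ts i by apply: (I1 s) => //; exact: fsubset_refl.
  rewrite in_fsetU; case xs: (x \in s); first by rewrite inDset sK xs.
  apply/orP; right; apply/imfsetP; exists (x |` s); last by rewrite fsetU1K // xs.
  rewrite /= inDset fsetU11 andbT; apply: (I1 t) => //.
  - by rewrite fsubUset fsub1set xt st.
  - by rewrite fsubUset fsub1set xA sA.
  - by apply/fset0Pn; exists x; rewrite fsetU11.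
apply: leq_trans (fsubset_leq_card sub) _; apply: leq_trans (leq_card_fsetU _ _) _.
rewrite mul2n -addnn leq_add //; exact: card_imfset_le.
Qed.

Lemma Phi0 ts : Phi ts 0 = 0.
Proof.
rewrite /Phi big1_seq // => x _; rewrite /D.
have -> : Dset ts 0 x = fset0.
  by apply/fsetP => s; rewrite inDset /towerK take0 /= in_fset0.
by rewrite cardfs0.
Qed.

Lemma sg_le_dim ts i sg : i < size ts -> nth (Incl fset0) ts i = Incl sg ->
  #|` sg| <= (tower_dim ts + 1).
Proof.
move=> hi E.
have sK : sg \in towerK ts i.+1 by rewrite towerKS // E /= fsetU11.
have h1 : #|` sg| - 1 <= cdim (towerK ts i.+1).
  rewrite /cdim; exact: (@leq_bigmax_seq _ _ xpredT (fun s : {fset nat} => #|` s| - 1) sg sK).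
have h2 : cdim (towerK ts i.+1) <= tower_dim ts.
  rewrite /tower_dim.
  have hi' : i.+1 < (size ts).+1 by [].
  exact: (@leq_bigmax _ (fun j : 'I_(size ts).+1 => cdim (towerK ts j)) (Ordinal hi')).
lia.
Qed.

Lemma main_nat ts : valid_tower ts -> naming_convention ts -> forall i, i <= size ts ->
  #|` (coning ts i).1| + 2 * Phi ts i <=
    count is_incl (take i ts) * (1 + 2 * (tower_dim ts + 1) * Lg ts).
Proof.
move=> VT NC; elim=> [|i IH] hi.
  by rewrite Phi0 /coning take0.
have hi' : i < size ts by [].
have {}IH := IH (ltnW hi).
rewrite (take_nth (Incl fset0) hi') -cats1 count_cat /= addn0 coningS //.
have [_ [Vs _]] := VT.
have := Vs _ hi'; have NCi := NC i; move: NCi.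
case E: (nth _ ts i) => [sg|u v] /= NCi vs.
- have hP := Phi_incl VT hi' E.
  have hs := sg_le_dim hi' E.
  have hH : #|` sg |` (coning ts i).1| <= #|` (coning ts i).1| + 1.
    by rewrite cardfsU1 addnC leq_add2l leq_b1.
  have hL : #|` sg| * Lg ts <= (tower_dim ts + 1) * Lg ts by apply: leq_mul.
  move: IH hP hH hL; set a := #|` _ |` _|; set b := #|` (coning ts i).1|; set P := Phi ts i.
  set P' := Phi ts i.+1; set c := count _ _; set L := Lg ts; set d := (tower_dim ts + 1)%nat.
  nia.
- case: vs => uv Ku Kv.
  have hP := Phi_contr VT hi' E.
  have h1 := act_star_le VT (ltnW hi) Ku.
  have h2 := act_star_le VT (ltnW hi) Kv.
  have h3 := NCi u v hi' erefl.
  have hH : #|` (coning ts i).1 `|` cone u (act_star v (coning ts i))| <=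
            #|` (coning ts i).1| + #|` act_star v (coning ts i)|.
    apply: leq_trans (leq_card_fsetU _ _) _; rewrite leq_add2l; exact: card_imfset_le.
  have hm : #|` act_star v (coning ts i)| <= 2 * minn (D ts i u) (D ts i v).
    have h4 := leq_trans h3 h1; move: h2 h4; set s := #|` act_star v _|; set x := D ts i u; set y := D ts i v; lia.
  move: IH hP hH hm; set a := #|` _ `|` _|; set b := #|` (coning ts i).1|; set P := Phi ts i.
  set P' := Phi ts i.+1; set c := count _ _; set m := minn _ _; set s := #|` act_star v _|.
  lia.
Qed.
Local Close Scope fset_scope.

Lemma ln_le' (x y : R) : (0 < x)%R -> (x <= y)%R -> (ln x <= ln y)%R.
Proof.
move=> x0 xy; case: (Rle_lt_or_eq_dec _ _ xy) => [h|->]; last by apply: Rle_refl.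
by apply: Rlt_le; apply: ln_increasing.
Qed.

Lemma INR_expn2 k : INR (expn 2 k) = (2 ^ k)%R.
Proof.
elim: k => [|k IH]; first by []. rewrite expnS mult_INR IH /=; ring.
Qed.

Lemma ln2_pos : (0 < ln 2)%R.
Proof. rewrite -ln_1; apply: ln_increasing; lra. Qed.

Lemma Lg_le ts : (INR (Lg ts) <= ln (INR (n_vertex_incl ts)) / ln 2)%R.
Proof.
rewrite /Lg; set n0 := n_vertex_incl ts.
have l2 := ln2_pos.
case: (posnP n0) => [->|n0p].
  have e0 : ln (INR 0) = 0%R.
    rewrite /ln; case: Rlt_dec => [a|_] //.
    by exfalso; exact: (Rlt_irrefl 0 a).
  rewrite e0 trunc_log0 /Rdiv Rmult_0_l /=; lra.
have h := trunc_logP (erefl (1 < 2)) n0p.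
move/leP: h => h; apply le_INR in h; rewrite INR_expn2 in h.
have h2 : (0 < 2 ^ trunc_log 2 n0)%R by apply: pow_lt; lra.
have := ln_le' h2 h; rewrite ln_pow; last lra.
move=> h3.
have -> : INR (trunc_log 2 n0) = (INR (trunc_log 2 n0) * ln 2 / ln 2)%R by field; lra.
apply: Rmult_le_compat_r => //; apply: Rlt_le; apply: Rinv_0_lt_compat; lra.
Qed.

Theorem proposition12 (ts : seq step) :
  valid_tower ts -> naming_convention ts ->
  (INR #|` (coning ts (size ts)).1| <=
     INR (n_incl ts)
     + 2 * INR (tower_dim ts + 1) * INR (n_incl ts)
         * (1 + ln (INR (n_vertex_incl ts)) / ln 2))%R.
Proof.
move=> VT NC.
have h := main_nat VT NC (leqnn (size ts)); rewrite take_size in h.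
have hN : (#|` (coning ts (size ts)).1| <= n_incl ts * (1 + 2 * (tower_dim ts + 1) * Lg ts))%nat.
  by apply: leq_trans h; apply: leq_addr.
move/leP: hN => hN; apply le_INR in hN.
have hL := Lg_le ts.
move: hN hL; set N := #|` _|; set n := n_incl ts; set d := (tower_dim ts + 1)%nat; set L := Lg ts.
set X := (ln _ / ln 2)%R => hN hL.
rewrite !mult_INR plus_INR mult_INR in hN.
have e2 : INR 2 = 2%R by [].
rewrite mult_INR e2 in hN; change (INR 1) with 1%R in hN.
have p1 : (0 <= INR d)%R by apply: pos_INR.
have p2 : (0 <= INR n)%R by apply: pos_INR.
have p3 : (0 <= 2 * INR d * INR n)%R by apply: Rmult_le_pos => //; apply: Rmult_le_pos => //; lra.
have p4 : (2 * INR d * INR n * INR L <= 2 * INR d * INR n * (1 + X))%R.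
  apply: Rmult_le_compat_l => //; lra.
nra.
Qed.
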